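(* Let $A$ be a real symmetric $n\times n$ matrix with symmetric tropical rank $r$. Choose a real number $M$ less than every entry of $A$ and a real number $P$ greater than every entry of $A$, and define the $(n+1)\times(n+1)$ matrix $$A'=\begin{pmatrix}A&\mathbf P\\ \mathbf P^{T}&M\end{pmatrix},$$ where $\mathbf P$ is the column vector of length $n$ with all entries $P$. Then $A'$ has symmetric tropical rank $r+1$.
   Context: For an $r\times r$ submatrix of a real symmetric matrix $A$ with row index set $I$ and column index set $J$, each bijection $\rho:I\to J$ gives a monomial $\prod_{i\in I}X_{i,\rho(i)}$ in commuting variables subject to $X_{i,j}=X_{j,i}$, with value $\sum_{i\in I}A_{i,\rho(i)}$; the submatrix is symmetrically tropically singular if the minimum value is attained by at least two distinct monomials. The symmetric tropical rank of $A$ is the largest $r$ such that $A$ has an $r\times r$ submatrix (arbitrary row and column sets) that is not symmetrically tropically singular. *)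

(* Defs.v *)
From mathcomp Require Import all_boot all_order all_algebra.
From mathcomp Require Import all_classical all_reals.
Set Implicit Arguments. Unset Strict Implicit. Unset Printing Implicit Defensive.
Import Order.TTheory GRing.Theory Num.Theory.
Local Open Scope ring_scope.

Section SymTrop.
Variables (R : realDomainType) (n : nat) (A : 'M[R]_n).

Definition is_bij (I J : {set 'I_n}) (f : {ffun 'I_n -> 'I_n}) : bool :=
  (f @: I == J) && [forall i in I, forall j in I, (f i == f j) ==> (i == j)].

(* Exponent of the symmetric variable X_{a,b} = X_{b,a} in the monomial
   prod_{i in I} X_{i, f i}. *)
Definition mono_cnt (I : {set 'I_n}) (f : {ffun 'I_n -> 'I_n}) (a b : 'I_n) : nat :=
  #|[set i in I | ((i == a) && (f i == b)) || ((i == b) && (f i == a))]|.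

Definition same_monomial (I : {set 'I_n}) (f g : {ffun 'I_n -> 'I_n}) : bool :=
  [forall a, forall b, mono_cnt I f a b == mono_cnt I g a b].

Definition bij_value (I : {set 'I_n}) (f : {ffun 'I_n -> 'I_n}) : R :=
  \sum_(i in I) A i (f i).

Definition attains_min (I J : {set 'I_n}) (f : {ffun 'I_n -> 'I_n}) : bool :=
  is_bij I J f &&
  [forall h : {ffun 'I_n -> 'I_n}, is_bij I J h ==> (bij_value I f <= bij_value I h)].

Definition sym_trop_singular (I J : {set 'I_n}) : bool :=
  [exists f : {ffun 'I_n -> 'I_n}, exists g : {ffun 'I_n -> 'I_n},
     [&& attains_min I J f, attains_min I J g & ~~ same_monomial I f g]].

Definition sym_trop_rank : nat :=
  \max_(IJ : {set 'I_n} * {set 'I_n} |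
          (#|IJ.1| == #|IJ.2|) && ~~ sym_trop_singular IJ.1 IJ.2) #|IJ.1|.

End SymTrop.

Definition border_mx (R : realDomainType) (n : nat) (A : 'M[R]_n) (M P : R)
  : 'M[R]_(n + 1) :=
  block_mx A (const_mx P) (const_mx P) (const_mx M).

(* Main.v *)
Require Import Defs.
From mathcomp Require Import all_boot all_order all_algebra.
From mathcomp Require Import all_classical all_reals.
From mathcomp Require Import perm.
From mathcomp.zify Require Import zify.
From mathcomp.algebra_tactics Require Import lra.
Set Implicit Arguments. Unset Strict Implicit. Unset Printing Implicit Defensive.
Import Order.TTheory GRing.Theory Num.Theory.
Local Open Scope ring_scope.

Section Gen.
Variable R : realType.

Lemma is_bijP n (I J : {set 'I_n}) f :
  is_bij I J f <->
  [/\ {in I, forall i, f i \in J}, {in I &, injective f} &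
      forall j, j \in J -> exists2 i, i \in I & f i = j].
Proof.
rewrite /is_bij; split.
- case/andP => /eqP <- /forall_inP H; split.
  + by move=> i iI; apply: imset_f.
  + move=> i j iI jI fij.
    have /forall_inP/(_ j jI)/implyP := H i iI.
    by rewrite fij eqxx => /(_ isT)/eqP.
  + by move=> j /imsetP [i iI ->]; exists i.
- case=> H1 H2 H3; apply/andP; split.
  + apply/eqP/setP => j; apply/imsetP/idP => [[i iI ->]|jJ]; first exact: H1.
    by have [i iI <-] := H3 j jJ; exists i.
  + apply/forall_inP => i iI; apply/forall_inP => j jI; apply/implyP => /eqP fij.
    by apply/eqP; apply: H2.
Qed.

Lemma is_bij_ext n (I J : {set 'I_n}) (f g : {ffun 'I_n -> 'I_n}) :
  {in I, f =1 g} -> is_bij I J f -> is_bij I J g.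
Proof.
move=> e /is_bijP[h1 h2 h3]; apply/is_bijP; split.
- by move=> i iI; rewrite -e //; apply: h1.
- by move=> i j iI jI; rewrite -!e //; apply: h2.
- by move=> j /h3[i iI <-]; exists i; rewrite ?e.
Qed.

Lemma value_ext n (A : 'M[R]_n) (I : {set 'I_n}) (f g : {ffun 'I_n -> 'I_n}) :
  {in I, f =1 g} -> bij_value A I f = bij_value A I g.
Proof. by move=> e; apply: eq_bigr => i iI; rewrite e. Qed.

Lemma mono_ext n (I : {set 'I_n}) (f g : {ffun 'I_n -> 'I_n}) a b :
  {in I, f =1 g} -> mono_cnt I f a b = mono_cnt I g a b.
Proof.
move=> e; apply: eq_card => x; rewrite !inE.
by case xI: (x \in I) => //=; rewrite e.
Qed.

Lemma same_ext n (I : {set 'I_n}) (f1 f2 g1 g2 : {ffun 'I_n -> 'I_n}) :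
  {in I, f1 =1 f2} -> {in I, g1 =1 g2} ->
  same_monomial I f1 g1 = same_monomial I f2 g2.
Proof.
move=> e1 e2; apply: eq_forallb => a; apply: eq_forallb => b.
by rewrite (mono_ext a b e1) (mono_ext a b e2).
Qed.

Lemma exists_bij n (I J : {set 'I_n}) : #|I| = #|J| -> exists f, is_bij I J f.
Proof.
move=> cIJ; exists [ffun x => nth x (enum J) (index x (enum I))].
have szI : size (enum I) = #|I| by rewrite cardE.
have szJ : size (enum J) = #|J| by rewrite cardE.
have idx i : i \in I -> (index i (enum I) < size (enum J))%N.
  by move=> iI; rewrite szJ -cIJ -szI index_mem mem_enum.
apply/is_bijP; split.
- by move=> i iI; rewrite ffunE -mem_enum mem_nth // idx.
- move=> i j iI jI; rewrite !ffunE (set_nth_default i _ (idx j jI)) => /eqP.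
  rewrite nth_uniq ?enum_uniq ?(idx i iI) ?(idx j jI) // => /eqP.
  by move/(congr1 (nth i (enum I))); rewrite !nth_index ?mem_enum.
- move=> j jJ.
  have kJ : (index j (enum J) < size (enum I))%N.
    by rewrite szI cIJ -szJ index_mem mem_enum.
  exists (nth j (enum I) (index j (enum J))); first by rewrite -mem_enum mem_nth.
  rewrite ffunE index_uniq ?enum_uniq //.
  by rewrite (set_nth_default j) ?index_mem ?mem_enum // nth_index // mem_enum.
Qed.

Lemma exists_min n (B : 'M[R]_n) I J f0 :
  is_bij I J f0 -> exists F, attains_min B I J F.
Proof.
move=> bf0.
have [F bF Fmin] := arg_minP (fun h => bij_value B I h) (P := [pred h | is_bij I J h]) bf0.
exists F; rewrite /attains_min (bF : is_bij I J F); apply/forallP=> h; apply/implyP => bh.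
exact: Fmin.
Qed.

Lemma nonsing0 n (B : 'M[R]_n) : ~~ sym_trop_singular B finset.set0 finset.set0.
Proof.
apply/existsP => -[f /existsP [g /and3P [_ _ /negP]]]; apply.
apply/forallP => a; apply/forallP => b.
by rewrite /mono_cnt !(@eq_card0 _ [set i in finset.set0 | _]) // => x; rewrite !inE.
Qed.

Lemma T_abs n1 n2 (B1 : 'M[R]_n1) (B2 : 'M[R]_n2) I J I' J'
  (Phi : {ffun 'I_n1 -> 'I_n1} -> {ffun 'I_n2 -> 'I_n2}) (c : R) F0 f0 :
  (forall f, is_bij I J f -> is_bij I' J' (Phi f) /\
             bij_value B2 I' (Phi f) = bij_value B1 I f + c) ->
  attains_min B2 I' J' F0 -> is_bij I J f0 ->
  bij_value B2 I' F0 = bij_value B1 I f0 + c ->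
  (forall f g, is_bij I J f -> is_bij I J g ->
     same_monomial I' (Phi f) (Phi g) -> same_monomial I f g) ->
  sym_trop_singular B1 I J -> sym_trop_singular B2 I' J'.
Proof.
move=> Ha /andP[bF0 /forallP mF0] bf0 vF0 Hc.
move=> /existsP[f /existsP[g /and3P[mf mg nfg]]].
have minPhi h : attains_min B1 I J h -> attains_min B2 I' J' (Phi h).
  case/andP => bh /forallP hmin.
  have [bPh vPh] := Ha h bh.
  rewrite /attains_min bPh; apply/forallP => H; apply/implyP => bH.
  apply: le_trans (implyP (mF0 H) bH); rewrite vF0 vPh lerD2r.
  exact: (implyP (hmin f0) bf0).
apply/existsP; exists (Phi f); apply/existsP; exists (Phi g).
rewrite !minPhi //=; apply/negP => /Hc.
move: mf mg => /andP[bf _] /andP[bg _].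
by move=> /(_ bf bg) sfg; rewrite sfg in nfg.
Qed.

Lemma T2_abs n1 n2 (B1 : 'M[R]_n1) (B2 : 'M[R]_n2) I J I' J'
  (Phi : {ffun 'I_n1 -> 'I_n1} -> {ffun 'I_n2 -> 'I_n2}) (c : R) :
  (forall f, is_bij I J f -> is_bij I' J' (Phi f) /\
             bij_value B2 I' (Phi f) = bij_value B1 I f + c) ->
  (forall F, attains_min B2 I' J' F -> exists2 f, is_bij I J f & {in I', F =1 Phi f}) ->
  (forall f g, is_bij I J f -> is_bij I J g ->
     same_monomial I f g -> same_monomial I' (Phi f) (Phi g)) ->
  sym_trop_singular B2 I' J' -> sym_trop_singular B1 I J.
Proof.
move=> Ha Hb Hc /existsP[F /existsP[G /and3P[mF mG nFG]]].
have [f bf eF] := Hb F mF; have [g bg eG] := Hb G mG.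
have minf F1 f1 : attains_min B2 I' J' F1 -> is_bij I J f1 -> {in I', F1 =1 Phi f1} ->
    attains_min B1 I J f1.
  move=> /andP[_ /forallP m1] b1 e1; rewrite /attains_min b1.
  apply/forallP => h; apply/implyP => bh.
  have [_ v1] := Ha f1 b1; have [bh' vh] := Ha h bh.
  rewrite -(lerD2r c) -v1 -vh -(value_ext B2 e1).
  exact: (implyP (m1 (Phi h)) bh').
apply/existsP; exists f; apply/existsP; exists g.
rewrite (minf F f) // (minf G g) //=; apply/negP => /(Hc _ _ bf bg).
by rewrite -(same_ext eF eG) => sFG; rewrite sFG in nFG.
Qed.

End Gen.



Section Border.
Variable n : nat.

Definition emb : 'I_n -> 'I_(n+1) := @lshift n 1.
Definition top : 'I_(n+1) := @rshift n 1 ord0.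

Variant ext_spec (x : 'I_(n+1)) : Type :=
  | ExtLo i of x = emb i
  | ExtHi of x = top.

Lemma extP x : ext_spec x.
Proof.
rewrite -(fintype.splitK x); case: (fintype.split x) => [i|k]; first exact: ExtLo.
by rewrite (ord1 k); apply: ExtHi.
Qed.

Lemma emb_inj : injective emb.
Proof. exact: lshift_inj. Qed.

Lemma emb_topF i : (emb i == top) = false.
Proof.
apply/negbTE/eqP => /(congr1 val) /=; rewrite addn0 => h.
by move: (ltn_ord i); rewrite h ltnn.
Qed.

Lemma top_embF i : (top == emb i) = false.
Proof. by rewrite eq_sym emb_topF. Qed.

Lemma split_emb i : fintype.split (emb i) = inl i.
Proof. exact: (unsplitK (inl i)). Qed.

Lemma mem_embS (S : {set 'I_n}) i : (emb i \in emb @: S) = (i \in S).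
Proof. exact: (mem_imset _ _ emb_inj). Qed.

Lemma top_notin (S : {set 'I_n}) : top \notin emb @: S.
Proof. by apply/imsetP => -[i _ /eqP]; rewrite top_embF. Qed.

Definition Phi (u v : 'I_(n+1)) (f : {ffun 'I_n -> 'I_n}) : {ffun 'I_(n+1) -> 'I_(n+1)} :=
  [ffun x => if x == u then v else
             match fintype.split x with inl i => emb (f i) | inr _ => top end].

Definition Psi (F : {ffun 'I_(n+1) -> 'I_(n+1)}) : {ffun 'I_n -> 'I_n} :=
  [ffun i => match fintype.split (F (emb i)) with inl j => j | inr _ => i end].

Lemma PhiE_u u v f : Phi u v f u = v.
Proof. by rewrite ffunE eqxx. Qed.

Lemma PhiE_e u v f i : emb i != u -> Phi u v f (emb i) = emb (f i).
Proof. by move=> h; rewrite ffunE (negbTE h) split_emb. Qed.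

Lemma PsiE (F : {ffun 'I_(n+1) -> 'I_(n+1)}) i j : F (emb i) = emb j -> Psi F i = j.
Proof. by move=> h; rewrite ffunE h split_emb. Qed.

Definition ext1 (b : bool) (u : 'I_(n+1)) (S : {set 'I_n}) : {set 'I_(n+1)} :=
  if b then u |: (emb @: S) else emb @: S.

Lemma mem_ext1 b u (S : {set 'I_n}) x : (x \in ext1 b u S) = (b && (x == u)) || (x \in emb @: S).
Proof. by rewrite /ext1; case: b => //=; rewrite !inE. Qed.

Lemma card_ext1 b u (S : {set 'I_n}) : u \notin emb @: S -> #|ext1 b u S| = (b + #|S|)%N.
Proof.
move=> hu; rewrite /ext1; case: b => /=.
  by rewrite cardsU1 hu card_imset //; exact: emb_inj.
by rewrite card_imset //; exact: emb_inj.
Qed.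

Variable R : realType.

Lemma sum_ext1 b u (S : {set 'I_n}) (F : 'I_(n+1) -> R) : u \notin emb @: S ->
  \sum_(x in ext1 b u S) F x = (if b then F u else 0) + \sum_(i in S) F (emb i).
Proof.
move=> hu; rewrite /ext1; case: b => /=.
  by rewrite big_setU1 //= big_imset //; move=> i j _ _; exact: emb_inj.
by rewrite add0r big_imset //; move=> i j _ _; exact: emb_inj.
Qed.

Variables (A : 'M[R]_n) (M P : R).
Local Notation B := (border_mx A M P).

Lemma B_ee i j : B (emb i) (emb j) = A i j.
Proof. by rewrite /border_mx /emb block_mxEul. Qed.
Lemma B_et i : B (emb i) top = P.
Proof. by rewrite /border_mx /emb /top block_mxEur mxE. Qed.
Lemma B_te j : B top (emb j) = P.
Proof. by rewrite /border_mx /emb /top block_mxEdl mxE. Qed.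
Lemma B_tt : B top top = M.
Proof. by rewrite /border_mx /top block_mxEdr mxE. Qed.

Section Gen2.
Variables (b : bool) (u v : 'I_(n+1)) (I J : {set 'I_n}).
Hypotheses (hu : u \notin emb @: I) (hv : v \notin emb @: J).

Lemma neq_u i : i \in I -> emb i != u.
Proof. by move=> iI; apply/eqP => h; move: hu; rewrite -h mem_embS iI. Qed.

Lemma neq_v j : j \in J -> emb j != v.
Proof. by move=> jJ; apply/eqP => h; move: hv; rewrite -h mem_embS jJ. Qed.

Lemma Phi_bij f : is_bij I J f -> is_bij (ext1 b u I) (ext1 b v J) (Phi u v f).
Proof.
case/is_bijP => h1 h2 h3; apply/is_bijP; split.
- move=> x; rewrite mem_ext1 => /orP[/andP[bb /eqP ->]|/imsetP[i iI ->]].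
    by rewrite PhiE_u mem_ext1 bb eqxx.
  by rewrite PhiE_e ?neq_u // mem_ext1 mem_embS h1 ?orbT.
- move=> x y; rewrite !mem_ext1.
  move=> /orP[/andP[_ /eqP ->]|/imsetP[i iI ->]] /orP[/andP[_ /eqP ->]|/imsetP[j jJ ->]] //.
  + rewrite PhiE_u PhiE_e ?neq_u // => h; move: hv; rewrite h mem_embS h1 //.
  + rewrite PhiE_u PhiE_e ?neq_u // => h; move: hv; rewrite -h mem_embS h1 //.
  + by rewrite !PhiE_e ?neq_u // => /emb_inj /h2 ->.
- move=> y; rewrite mem_ext1 => /orP[/andP[bb /eqP ->]|/imsetP[j jJ ->]].
    by exists u; rewrite ?PhiE_u // mem_ext1 bb eqxx.
  have [i iI <-] := h3 j jJ.
  by exists (emb i); rewrite ?PhiE_e ?neq_u // mem_ext1 mem_embS iI orbT.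
Qed.

Lemma Phi_val f : bij_value B (ext1 b u I) (Phi u v f) =
  (if b then B u v else 0) + bij_value A I f.
Proof.
rewrite /bij_value sum_ext1 // PhiE_u; congr (_ + _).
by apply: eq_bigr => i iI; rewrite PhiE_e ?neq_u // B_ee.
Qed.

Hypothesis huv : (u == top) || (v == top).

Lemma Phi_mono f a c :
  mono_cnt (ext1 b u I) (Phi u v f) (emb a) (emb c) = mono_cnt I f a c.
Proof.
rewrite /mono_cnt -(card_imset _ emb_inj); apply: eq_card => x.
rewrite !inE mem_ext1; case: (extP x) => [i ->| ->]; last first.
  by rewrite !top_embF andbF; apply/esym/negbTE; exact: top_notin.
rewrite !mem_embS !inE !(inj_eq emb_inj).
case: (eqVneq (emb i) u) => [eiu|neiu].
  have Iu : i \notin I by apply/negP => /neq_u; rewrite eiu eqxx.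
  have vt : v = top by move: huv; rewrite -eiu emb_topF => /eqP.
  by rewrite (negbTE Iu) eiu PhiE_u vt !top_embF !andbF.
by rewrite andbF /= PhiE_e // !(inj_eq emb_inj).
Qed.

Lemma Psi_spec (F : {ffun 'I_(n+1) -> 'I_(n+1)}) :
  is_bij (ext1 b u I) (ext1 b v J) F -> (b -> F u = v) ->
  is_bij I J (Psi F) /\ {in ext1 b u I, F =1 Phi u v (Psi F)}.
Proof.
case/is_bijP => h1 h2 h3 Fu.
have key i : i \in I -> exists2 j, j \in J & F (emb i) = emb j.
  move=> iI; have eI : emb i \in ext1 b u I by rewrite mem_ext1 mem_embS iI orbT.
  move: (h1 _ eI); rewrite mem_ext1 => /orP[/andP[bb /eqP Fv]|/imsetP[j jJ ->]].
    have uI : u \in ext1 b u I by rewrite mem_ext1 bb eqxx.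
    have := h2 _ _ eI uI; rewrite Fv Fu // => /(_ erefl) eu.
    by move: (neq_u iI); rewrite eu eqxx.
  by exists j.
have memI i : i \in I -> emb i \in ext1 b u I.
  by move=> iI; rewrite mem_ext1 mem_embS iI orbT.
split.
- apply/is_bijP; split.
  + by move=> i /key[j jJ /PsiE ->].
  + move=> i1 i2 /[dup] iI1 /key[j1 _ e1] /[dup] iI2 /key[j2 _ e2].
    rewrite (PsiE e1) (PsiE e2) => ej; subst j2.
    by apply: emb_inj; apply: (h2 _ _ (memI _ iI1) (memI _ iI2)); rewrite e1 e2.
  + move=> j jJ.
    have ejJ : emb j \in ext1 b v J by rewrite mem_ext1 mem_embS jJ orbT.
    have [x xI Fx] := h3 _ ejJ.
    move: xI; rewrite mem_ext1 => /orP[/andP[bb /eqP xu]|/imsetP[i iI xi]].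
      by move: (neq_v jJ); rewrite -Fx xu Fu // eqxx.
    by exists i => //; apply: PsiE; rewrite -xi.
- move=> x; rewrite mem_ext1 => /orP[/andP[bb /eqP ->]|/imsetP[i iI ->]].
    by rewrite PhiE_u Fu.
  have [j jJ e1] := key i iI.
  by rewrite PhiE_e ?neq_u // (PsiE e1).
Qed.

End Gen2.
End Border.



Section Main.
Variables (n : nat) (R : realType) (A : 'M[R]_n) (M P : R).
Local Notation B := (border_mx A M P).
Local Notation top := (top n).
Local Notation emb := (@emb n).

Lemma PhiE_top v f i : Phi top v f (emb i) = emb (f i).
Proof. by rewrite PhiE_e // emb_topF. Qed.

Lemma Phi_mono_full (I : {set 'I_n}) f g : same_monomial I f g ->
  same_monomial (ext1 true top I) (Phi top top f) (Phi top top g).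
Proof.
move=> /forallP sfg; apply/forallP => a'; apply/forallP => c'.
have hu := top_notin I.
have huv : (top == top) || (top == top) by rewrite eqxx.
case: (extP a') => [a ->|->]; case: (extP c') => [c ->|->].
- by rewrite !(Phi_mono true hu huv); move/forallP: (sfg a) => /(_ c).
- apply/eqP; apply: eq_card => x; rewrite !inE.
  by case: (extP x) => [i ->|->]; rewrite ?PhiE_top ?PhiE_u ?emb_topF ?andbF.
- apply/eqP; apply: eq_card => x; rewrite !inE.
  by case: (extP x) => [i ->|->]; rewrite ?PhiE_top ?PhiE_u ?emb_topF ?andbF.
- apply/eqP; apply: eq_card => x; rewrite !inE.
  by case: (extP x) => [i ->|->]; rewrite ?PhiE_top ?PhiE_u ?emb_topF ?andbF.
Qed.

Hypotheses (hM : forall i j, M < A i j) (hP : forall i j, A i j < P).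

Lemma swap (I J : {set 'I_n}) F :
  attains_min B (ext1 true top I) (ext1 true top J) F -> F top = top.
Proof.
case/andP => bF /forallP mF.
case: (eqVneq (F top) top) => // Fne.
have [h1 h2 h3] := (is_bijP _ _ _).1 bF.
set I' := ext1 true top I.
have tI : top \in I' by rewrite mem_ext1 eqxx.
have tJ : top \in ext1 true top J by rewrite mem_ext1 eqxx.
have [j eFj] : exists j, F top = emb j.
  move: (h1 _ tI); rewrite mem_ext1 /= (negbTE Fne) => /imsetP[j _ ->].
  by exists j.
have [x xI Fx] := h3 _ tJ.
have xt : x != top by apply/eqP => xt; move: Fne; rewrite -{1}xt Fx eqxx.
have [i ei] : exists i, x = emb i.
  by case: (extP x) xt => [i ->|->]; [exists i | rewrite eqxx].
pose F2 := [ffun z => F (tperm top x z)].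
have tpI z : z \in I' -> tperm top x z \in I'.
  by move=> zI; case: tpermP.
have bF2 : is_bij I' (ext1 true top J) F2.
  apply/is_bijP; split.
  - by move=> z zI; rewrite ffunE; apply: h1; apply: tpI.
  - move=> z1 z2 z1I z2I; rewrite !ffunE => /(h2 _ _ (tpI _ z1I) (tpI _ z2I)).
    exact: perm_inj.
  - move=> y /h3[z zI <-]; exists (tperm top x z); first exact: tpI.
    by rewrite ffunE tpermK.
have := implyP (mF F2) bF2.
have xI' : x \in I' :\ top by rewrite in_setD1 xt xI.
rewrite /bij_value !(big_setD1 _ tI) !(big_setD1 _ xI') /=.
have eS z : z \in I' :\ top :\ x -> B z (F2 z) = B z (F z).
  rewrite !inE => /and3P[zx zt _].
  by rewrite ffunE tpermD //; rewrite eq_sym.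
rewrite (eq_bigr _ eS).
rewrite !ffunE tpermL tpermR Fx eFj ei B_tt B_te B_et B_ee.
rewrite !addrA lerD2r => h.
have : M + A i j < P + P.
  by apply: ltrD; [apply: lt_trans (hM i j) (hP i j) | apply: hP].
by rewrite ltNge h.
Qed.

Lemma LB (I J : {set 'I_n}) : ~~ sym_trop_singular A I J ->
  ~~ sym_trop_singular B (ext1 true top I) (ext1 true top J).
Proof.
have hu := top_notin I; have hv := top_notin J.
have huv : (top == top) || (top == top) by rewrite eqxx.
apply: contra; apply: (T2_abs (Phi := Phi top top) (c := M)).
- move=> f bf; split; first exact: Phi_bij.
  by rewrite Phi_val // B_tt addrC.
- move=> F mF; have Ft := swap mF.
  have [bP eP] := Psi_spec hu hv (andP mF).1 (fun _ => Ft).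
  by exists (Psi F).
- by move=> f g _ _; exact: Phi_mono_full.
Qed.

Lemma UB b u v (I J : {set 'I_n}) F0 :
  u \notin emb @: I -> v \notin emb @: J -> (u == top) || (v == top) ->
  attains_min B (ext1 b u I) (ext1 b v J) F0 -> (b -> F0 u = v) ->
  ~~ sym_trop_singular B (ext1 b u I) (ext1 b v J) -> ~~ sym_trop_singular A I J.
Proof.
move=> hu hv huv mF0 Fu; apply: contra.
have [bP eP] := Psi_spec hu hv (andP mF0).1 Fu.
apply: (T_abs (Phi := Phi u v) (c := if b then B u v else 0) _ mF0 bP).
- move=> f bf; split; first exact: Phi_bij.
  by rewrite Phi_val // addrC.
- by rewrite (value_ext B eP) Phi_val // addrC.
- move=> f g _ _ /forallP s; apply/forallP => a; apply/forallP => c.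
  rewrite -!(Phi_mono b hu huv).
  by move/forallP: (s (emb a)) => /(_ (emb c)).
Qed.

End Main.



Section Fin.
Variables (n : nat) (R : realType) (A : 'M[R]_n) (M P : R).
Local Notation B := (border_mx A M P).
Local Notation top := (top n).
Local Notation emb := (@emb n).

Lemma decomp (S : {set 'I_(n+1)}) w : w \in S -> (top \in S -> w = top) ->
  exists2 T, S = ext1 true w T & w \notin emb @: T.
Proof.
move=> wS hw; exists [set i | (emb i \in S) && (emb i != w)].
  apply/setP => x; rewrite mem_ext1 /=; case: (eqVneq x w) => [->|xw] /=.
    by rewrite wS.
  case: (extP x) xw => [i -> eiw| -> tw]; first by rewrite mem_embS inE eiw andbT.
  rewrite (negbTE (top_notin _)); apply/negP => /hw tw'.
  by rewrite tw' eqxx in tw.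
apply/imsetP => -[i]; rewrite inE => /andP[_ ne] e.
by rewrite e eqxx in ne.
Qed.

Lemma decomp0 (S : {set 'I_(n+1)}) : top \notin S ->
  exists2 T, S = ext1 false top T & top \notin emb @: T.
Proof.
move=> tS; exists [set i | emb i \in S]; last exact: top_notin.
apply/setP => x; rewrite mem_ext1 /=; case: (extP x) => [i ->| ->].
  by rewrite mem_embS inE.
by rewrite (negbTE tS) (negbTE (top_notin _)).
Qed.

Lemma FIN b u v (I J : {set 'I_n}) F0 :
  u \notin emb @: I -> v \notin emb @: J -> (u == top) || (v == top) ->
  #|ext1 b u I| = #|ext1 b v J| ->
  attains_min B (ext1 b u I) (ext1 b v J) F0 -> (b -> F0 u = v) ->
  ~~ sym_trop_singular B (ext1 b u I) (ext1 b v J) ->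
  (#|ext1 b u I| <= (sym_trop_rank A).+1)%N.
Proof.
move=> hu hv huv c mF0 Fu ns.
have nsA := UB hu hv huv mF0 Fu ns.
rewrite !card_ext1 // in c *.
have cIJ : #|I| = #|J| by move/addnI: c.
have := @leq_bigmax_cond _ (fun IJ : {set 'I_n} * {set 'I_n} =>
   (#|IJ.1| == #|IJ.2|) && ~~ sym_trop_singular A IJ.1 IJ.2) (fun IJ => #|IJ.1|) (I, J).
rewrite /= cIJ eqxx nsA => /(_ isT) h.
rewrite /sym_trop_rank; case: b {c Fu mF0 ns} => /=.
  by rewrite add1n ltnS.
by rewrite add0n (leq_trans h) // leqnSn.
Qed.


End Fin.

Unset Implicit Arguments. Set Strict Implicit. Set Printing Implicit Defensive.


Theorem lemma7 (R : realType) (n : nat) (A : 'M[R]_n) (M P : R) :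
  A^T = A ->
  (forall i j, M < A i j) ->
  (forall i j, A i j < P) ->
  sym_trop_rank (border_mx A M P) = (sym_trop_rank A).+1.
Proof.
move=> _ hM hP.
have LBall (I J : {set 'I_n}) : #|I| = #|J| -> ~~ sym_trop_singular A I J ->
    (#|I|.+1 <= sym_trop_rank (border_mx A M P))%N.
  move=> cIJ ns.
  have := @leq_bigmax_cond _ (fun IJ : {set 'I_(n+1)} * {set 'I_(n+1)} =>
     (#|IJ.1| == #|IJ.2|) && ~~ sym_trop_singular (border_mx A M P) IJ.1 IJ.2)
     (fun IJ => #|IJ.1|) (ext1 true (top n) I, ext1 true (top n) J).
  rewrite !card_ext1 ?top_notin // cIJ eqxx (LB hM hP ns) => /(_ isT).
  by rewrite /sym_trop_rank add1n -cIJ.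
apply/eqP; rewrite eqn_leq; apply/andP; split.
- apply/bigmax_leqP => -[I' J'] /= /andP[/eqP c ns].
  have [f bf] := exists_bij c.
  have [F0 mF0] := exists_min (border_mx A M P) bf.
  have [h1 h2 h3] := (is_bijP _ _ _).1 (andP mF0).1.
  case tI: (top n \in I'); case tJ: (top n \in J').
  + have [I eI hu] := decomp tI (fun _ => erefl).
    have [J eJ hv] := decomp tJ (fun _ => erefl).
    subst I' J'.
    apply: (FIN hu hv _ c mF0) => //; first by rewrite eqxx.
    by move=> _; apply: (swap hM hP mF0).
  + have vJ := h1 _ tI.
    have [I eI hu] := decomp tI (fun _ => erefl).
    have [J eJ hv] : exists2 T, J' = ext1 true (F0 (top n)) T & F0 (top n) \notin @emb n @: T.
      by apply: decomp; rewrite ?tJ.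
    subst I' J'.
    by apply: (FIN hu hv _ c mF0) => //; rewrite eqxx.
  + have [x xI Fx] := h3 _ tJ.
    have [I eI hu] : exists2 T, I' = ext1 true x T & x \notin @emb n @: T.
      by apply: decomp; rewrite ?tI.
    have [J eJ hv] := decomp tJ (fun _ => erefl).
    subst I' J'.
    by apply: (FIN hu hv _ c mF0) => //; rewrite eqxx orbT.
  + have [I eI hu] := decomp0 (negbT tI).
    have [J eJ hv] := decomp0 (negbT tJ).
    subst I' J'.
    by apply: (FIN hu hv _ c mF0) => //; rewrite eqxx.
- have h0 := LBall finset.set0 finset.set0 erefl (nonsing0 A).
  have : (sym_trop_rank A <= (sym_trop_rank (border_mx A M P)).-1)%N.
    apply/bigmax_leqP => -[I J] /= /andP[/eqP c ns].
    have := LBall I J c ns.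
    by move=> h; rewrite -ltnS (leq_trans h) // leqSpred.
  by move=> h; rewrite -(ltn_predK h0) ltnS.
Qed.
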